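(* Let $L$ be a finite-dimensional Lie algebra over a field $F$. (1) If $S$ is a subalgebra with $\phi(L)\leq S\leq L$, then $\mathrm{nil}(S/\phi(L))=\mathrm{nil}(S)/\phi(L)$, where $\mathrm{nil}(S/\phi(L))$ is taken with respect to the Lie algebra $L/\phi(L)$. (2) If every two-generated proper subalgebra of $L$ is triangulable on $L$, then every two-generated proper subalgebra of $L/\phi(L)$ is triangulable on $L/\phi(L)$.
   Context: The Frattini ideal $\phi(L)$ is the largest ideal of $L$ contained in the intersection of all maximal subalgebras of $L$. For a Lie algebra $L$ and a subalgebra $S$, $\mathrm{nil}(S)$ denotes the unique maximal ideal of $S$ consisting of elements $x$ with $\mathrm{ad}_L x$ nilpotent. A subalgebra $S$ of $L$ is triangulable on $L$ if $\mathrm{ad}_L S$ is a Lie algebra of linear transformations of $L$ simultaneously triangulable over the algebraic closure of $F$ (equivalently, every element of $S^2$ acts nilpotently on $L$). A subalgebra is two-generated if it is generated as a Lie algebra by two elements. *)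

(* Defs.v *)
From HB Require Import structures.
From mathcomp Require Import all_boot all_order all_algebra.
Set Implicit Arguments. Unset Strict Implicit. Unset Printing Implicit Defensive.
Import GRing.Theory.
Local Open Scope ring_scope.


Section Lie.
Variables (F : fieldType) (L : vectType F) (br : L -> L -> L).

Definition is_lie : Prop :=
  [/\ (forall a x y z, br (a *: x + y) z = a *: br x z + br y z),
      (forall a x y z, br z (a *: x + y) = a *: br z x + br z y),
      (forall x, br x x = 0) &
      (forall x y z, br x (br y z) + br y (br z x) + br z (br x y) = 0)].

Definition subalg (S : {vspace L}) : Prop :=
  forall x y, x \in S -> y \in S -> br x y \in S.

Definition ideal_of (S I : {vspace L}) : Prop :=
  (I <= S)%VS /\ forall x y, x \in S -> y \in I -> br x y \in I.

Definition ideal (I : {vspace L}) : Prop := ideal_of fullv I.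

Definition maximal_subalg (M : {vspace L}) : Prop :=
  [/\ subalg M, M != fullv%VS &
      forall N : {vspace L}, subalg N -> (M <= N)%VS -> N = M \/ N = fullv%VS].

Definition is_frattini (Phi : {vspace L}) : Prop :=
  [/\ ideal Phi,
      (forall M, maximal_subalg M -> (Phi <= M)%VS) &
      (forall I, ideal I -> (forall M, maximal_subalg M -> (I <= M)%VS) ->
                 (I <= Phi)%VS)].

Definition ad_nilpotent (x : L) : Prop :=
  exists n, forall y, iter n (br x) y = 0.

Definition is_nil (S N : {vspace L}) : Prop :=
  [/\ ideal_of S N,
      (forall x, x \in N -> ad_nilpotent x) &
      (forall I, ideal_of S I -> (forall x, x \in I -> ad_nilpotent x) ->
                 (I <= N)%VS)].

(* S^2 = [S, S], the span of all brackets of elements of S (by bilinearity,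
   spanned by brackets of basis vectors). *)
Definition derived (S : {vspace L}) : {vspace L} :=
  <<[seq br x y | x <- vbasis S, y <- vbasis S]>>%VS.

Definition triangulable (S : {vspace L}) : Prop :=
  forall x, x \in derived S -> ad_nilpotent x.

Definition two_generated (S : {vspace L}) : Prop :=
  exists x y, [/\ subalg S, x \in S, y \in S &
    forall T, subalg T -> x \in T -> y \in T -> (S <= T)%VS].

End Lie.

(* pi : L -> Q presents (Q, brQ) as the quotient Lie algebra L / K. *)
Definition is_quotient_map (F : fieldType) (L Q : vectType F)
  (br : L -> L -> L) (brQ : Q -> Q -> Q) (pi : 'Hom(L, Q)) (K : {vspace L}) :=
  [/\ limg pi = fullv%VS, lker pi = K &
      forall x y, pi (br x y) = brQ (pi x) (pi y)].

(* Main.v *)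
From HB Require Import structures.
From mathcomp Require Import all_boot all_order all_algebra.
Require Import Defs.
From Stdlib Require Import Classical.
Set Implicit Arguments. Unset Strict Implicit. Unset Printing Implicit Defensive.
Import GRing.Theory.
Local Open Scope ring_scope.

Section Basics.
Variables (F : fieldType) (L : vectType F) (br : L -> L -> L).
Hypothesis hL : is_lie br.

Definition adr (x : L) : L -> L := br x.
Fact adr_lin x : linear (adr x).
Proof. by case: hL => _ h _ _ a u v; exact: h. Qed.
HB.instance Definition _ x := GRing.isLinear.Build F L L *:%R (adr x) (adr_lin x).
Definition adl (z : L) : L -> L := br ^~ z.
Fact adl_lin z : linear (adl z).
Proof. by case: hL => h _ _ _ a u v; exact: h. Qed.
HB.instance Definition _ z := GRing.isLinear.Build F L L *:%R (adl z) (adl_lin z).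

Lemma brDr x u v : br x (u + v) = br x u + br x v.
Proof. exact: (linearD (adr x)). Qed.
Lemma brDl x u v : br (u + v) x = br u x + br v x.
Proof. exact: (linearD (adl x)). Qed.
Lemma br0r x : br x 0 = 0.
Proof. exact: (linear0 (adr x)). Qed.
Lemma br0l x : br 0 x = 0.
Proof. exact: (linear0 (adl x)). Qed.

Lemma brNr x u : br x (- u) = - br x u.
Proof. exact: (linearN (adr x)). Qed.

Lemma br_anti u v : br u v = - br v u.
Proof.
case: hL => _ _ h0 _.
have := h0 (u + v); rewrite brDl !brDr !h0 add0r addr0 => /eqP.
by rewrite addr_eq0 => /eqP.
Qed.

Lemma br_der x a b : br x (br a b) = br (br x a) b + br a (br x b).
Proof.
case: hL => _ _ _ hJ.
have := hJ x a b.
rewrite (br_anti b x) (br_anti (br x a) b) (br_anti a (br x b)).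
move/eqP; rewrite -addrA addr_eq0 => /eqP ->.
by rewrite brNr [br (br x b) a]br_anti opprD !opprK addrC.
Qed.

Lemma iter_brD x n u v :
  iter n (br x) (u + v) = iter n (br x) u + iter n (br x) v.
Proof. by elim: n => //= n ->; rewrite brDr. Qed.

Lemma iter_br0 x n : iter n (br x) 0 = 0.
Proof. by elim: n => //= n ->; rewrite br0r. Qed.

Lemma leib x n : forall p q a b, (p + q = n)%N ->
  iter p (br x) a = 0 -> iter q (br x) b = 0 -> iter n (br x) (br a b) = 0.
Proof.
elim: n => [|n IH] p q a b hpq ha hb.
  have p0 : p = 0%N by case: p hpq ha.
  by move: ha; rewrite p0 /= => ->; rewrite br0l.
case: p hpq ha => [|p] hpq ha.
  by move: ha => /= ->; rewrite br0l iter_br0 ?br0r.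
case: q hpq hb => [|q] hpq hb.
  by move: hb => /= ->; rewrite br0r iter_br0 ?br0r.
rewrite iterSr br_der iter_brD.
rewrite (IH p q.+1 (br x a) b) ?(IH p.+1 q a (br x b)) ?addr0 //.
- by rewrite addnS in hpq; case: hpq.
- by rewrite -iterSr.
- by case: hpq.
- by rewrite -iterSr.
Qed.

Lemma br_derived (S : {vspace L}) u v : u \in S -> v \in S ->
  br u v \in derived br S.
Proof.
move=> uS vS.
have H1 e : e \in vbasis S -> forall w, w \in S -> adl e w \in derived br S.
  move=> eS w wS; rewrite (coord_vbasis wS) linear_sum.
  apply: memv_suml => i _; rewrite linearZ; apply: memvZ.
  apply: memv_span; apply: allpairs_f => //; apply: mem_nth.
  by rewrite size_tuple.
change (adr u v \in derived br S).
rewrite (coord_vbasis vS) linear_sum.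
apply: memv_suml => i _; rewrite linearZ; apply: memvZ.
apply: (H1 _ _ u uS); apply: mem_nth; by rewrite size_tuple.
Qed.

End Basics.

Section Kern.
Variables (F : fieldType) (L : vectType F).
Implicit Types D : 'End(L).

Definition Dk D k : 'End(L) := iter k (fun g => (D \o g)%VF) \1%VF.

Lemma DkE D k y : Dk D k y = iter k D y.
Proof. by elim: k => [|k IH] /=; rewrite ?id_lfunE // comp_lfunE -IH. Qed.

Lemma memK D k y : (y \in lker (Dk D k)) = (iter k D y == 0).
Proof. by rewrite memv_ker DkE. Qed.

Lemma Kmono D k : (lker (Dk D k) <= lker (Dk D k.+1))%VS.
Proof. by apply/subvP => y; rewrite !memK iterS => /eqP ->; rewrite linear0. Qed.

Lemma Kprop D k : lker (Dk D k) = lker (Dk D k.+1) ->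
  lker (Dk D k.+1) = lker (Dk D k.+2).
Proof.
move=> E; apply: subv_anti; apply/andP; split; first exact: Kmono.
apply/subvP => y; rewrite memK iterSr => hy.
have : D y \in lker (Dk D k.+1) by rewrite memK.
move=> h; rewrite -E memK in h.
by rewrite memK iterSr.
Qed.

Lemma Kprop2 D k i : lker (Dk D k) = lker (Dk D k.+1) ->
  lker (Dk D (i + k)) = lker (Dk D (i + k).+1).
Proof.
move=> E; elim: i => [|i IH]; first by rewrite add0n.
by rewrite addSn; apply: Kprop.
Qed.

Lemma Kstab D k : (\dim {:L} <= k)%N -> lker (Dk D k) = lker (Dk D k.+1).
Proof.
move=> hk; apply: NNPP => hne.
have hj : forall j, (j <= k)%N -> lker (Dk D j) != lker (Dk D j.+1).
  move=> j hjk; apply/eqP => E; apply: hne.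
  by have := Kprop2 (k - j) E; rewrite subnK.
have hd : forall j, (j <= k.+1)%N -> (j <= \dim (lker (Dk D j)))%N.
  elim=> [|j IH] hjk //.
  have lt : (\dim (lker (Dk D j)) < \dim (lker (Dk D j.+1)))%N.
    by rewrite (ltn_leqif (dimv_leqif_eq (Kmono D j))) hj.
  exact: leq_ltn_trans (IH (ltnW hjk)) lt.
have := hd k.+1 (leqnn _).
have := dimvS (subvf (lker (Dk D k.+1))).
move=> h1 h2; have := leq_trans h2 h1.
by rewrite ltnNge hk.
Qed.

Lemma Kstab2 D k m : (\dim {:L} <= k)%N -> (k <= m)%N ->
  lker (Dk D m) = lker (Dk D k).
Proof.
move=> hk; elim: m => [|m IH]; first by rewrite leqn0 => /eqP ->.
rewrite leq_eqVlt => /orP[/eqP -> //|hm].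
by rewrite -Kstab ?IH // (leq_trans hk).
Qed.

End Kern.


Section Frat.
Variables (F : fieldType) (L : vectType F) (br : L -> L -> L).
Hypothesis hL : is_lie br.
Variable Phi : {vspace L}.
Hypothesis hPhi : is_frattini br Phi.

Lemma subalg_full : subalg br fullv.
Proof. by move=> x y _ _; exact: memvf. Qed.

Lemma max_exists_aux k : forall B : {vspace L}, (\dim {:L} - \dim B < k)%N ->
  subalg br B -> B != fullv%VS -> exists M, maximal_subalg br M /\ (B <= M)%VS.
Proof.
elim: k => [//|k IH] B hk hB hBf.
case: (classic (maximal_subalg br B)) => hmax.
  by exists B; split => //; exact: subvv.
have [N [hN hBN hNB hNf]] : exists N : {vspace L},
    [/\ subalg br N, (B <= N)%VS, N != B & N != fullv%VS].
  apply: NNPP => hno; apply: hmax; split => // N hN hBN.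
  case: (classic (N = B)) => [-> | hNB]; first by left.
  case: (classic (N = fullv%VS)) => [-> | hNf]; first by right.
  exfalso; apply: hno; exists N; split => //; apply/eqP => //.
have lt : (\dim B < \dim N)%N.
  by rewrite (ltn_leqif (dimv_leqif_eq hBN)) eq_sym.
have hk' : (\dim {:L} - \dim N < k)%N.
  have hNL := dimvS (subvf N).
  rewrite ltnS in hk; apply: leq_trans hk.
  by rewrite ltn_sub2l // (leq_trans lt hNL).
have [M [hM hNM]] := IH N hk' hN hNf.
by exists M; split => //; exact: subv_trans hNM.
Qed.

Lemma frat_supp (B : {vspace L}) : subalg br B -> (B + Phi)%VS = fullv%VS ->
  B = fullv%VS.
Proof.
move=> hB hBP; apply: NNPP => hBf.
have [M [hMax hBM]] := @max_exists_aux (\dim {:L} - \dim B).+1 B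
  (ltnSn _) hB (introN eqP hBf).
case: (hMax) => hM hMf _.
case: hPhi => _ hPM _.
have : (fullv <= M)%VS.
  by rewrite -hBP subv_add hBM (hPM M hMax).
move=> hfM; move/eqP: hMf; apply.
by apply: subv_anti; rewrite subvf hfM.
Qed.

Lemma key (x : L) n : (forall y, iter n (br x) y \in Phi) -> ad_nilpotent br x.
Proof.
move=> hn.
pose D : 'End(L) := linfun (adr br x).
have iDE k y : iter k D y = iter k (br x) y.
  by elim: k => [//|k IH]; rewrite !iterS IH /D lfunE.
pose m := (\dim {:L} + n)%N.
have hm : (\dim {:L} <= m)%N by rewrite leq_addr.
pose K := lker (Dk D m).
have hPhiI : forall j y, y \in Phi -> iter j (br x) y \in Phi.
  case: hPhi => [[_ hI] _ _] j y yP.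
  elim: j => [//|j IH]; rewrite iterS; exact: hI (memvf x) IH.
have hKK : lker (Dk D (m + m)) = K.
  by apply: Kstab2 => //; rewrite leq_addr.
have hcap : (K :&: limg (Dk D m))%VS = 0%VS.
  apply/eqP; rewrite -subv0; apply/subvP => u.
  rewrite memv_cap => /andP[uK /memv_imgP[z _ uz]].
  rewrite memv0; move: uK; rewrite uz memK DkE -iterD => hz.
  have : z \in lker (Dk D (m + m)) by rewrite memK.
  by rewrite hKK memK.
have hsum : (K + limg (Dk D m))%VS = fullv%VS.
  apply/eqP; rewrite eqEdim subvf /= dimv_disjoint_sum //.
  by rewrite -(limg_ker_dim (Dk D m) fullv) capfv.
have himP : (limg (Dk D m) <= Phi)%VS.
  apply/subvP => w /memv_imgP[y _ ->].
  by rewrite DkE iDE /m iterD; apply: hPhiI.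
have hKsub : subalg br K.
  move=> a b; rewrite !memK !iDE => /eqP ha /eqP hb.
  have : br a b \in lker (Dk D (m + m)).
    by rewrite memK iDE (leib hL (p:=m) (q:=m)).
  by rewrite hKK memK iDE.
have hKf : K = fullv%VS.
  apply: frat_supp => //; apply: subv_anti; rewrite subvf /=.
  by rewrite -hsum addvS // subvv.
exists m => y.
have : y \in K by rewrite hKf memvf.
by rewrite memK iDE => /eqP.
Qed.

End Frat.

Section Gen.
Variables (F : fieldType) (L : vectType F) (br : L -> L -> L).

Definition good a b (S : {vspace L}) := [/\ subalg br S, a \in S & b \in S].

Lemma min_good_aux a b n : (exists S, good a b S /\ (\dim S <= n)%N) ->
  exists S, good a b S /\ forall T, good a b T -> (\dim S <= \dim T)%N.
Proof.
elim: n => [|n IH] [S [gS hS]].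
  by exists S; split => // T _; rewrite (leq_trans hS).
case: (classic (exists T, good a b T /\ (\dim T <= n)%N)) => [h|h].
  exact: IH.
exists S; split => // T gT; apply: (leq_trans hS).
rewrite ltnNge; apply/negP => hT; apply: h; by exists T.
Qed.

Lemma gen_exists a b : exists S, [/\ subalg br S, a \in S, b \in S &
    forall T, subalg br T -> a \in T -> b \in T -> (S <= T)%VS].
Proof.
have [S [[hS aS bS] hmin]] := @min_good_aux a b (\dim {:L})
  (ex_intro _ fullv (conj (And3 (fun x y _ _ => memvf _) (memvf a) (memvf b))
     (dimvS (subvf _)))).
exists S; split => // T hT aT bT.
have gST : good a b (S :&: T)%VS.
  split; rewrite ?memv_cap ?aS ?aT ?bS ?bT //.
  move=> x y; rewrite !memv_cap => /andP[xS xT] /andP[yS yT].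
  by rewrite hS ?hT.
have := hmin _ gST.
have hle := capvSl S T.
move=> hd.
have E : (S :&: T)%VS == S by rewrite eqEdim hle hd.
by apply/capv_idPl; apply/eqP.
Qed.

End Gen.

Theorem lemma4p5 (F : fieldType) (L Q : vectType F)
  (br : L -> L -> L) (brQ : Q -> Q -> Q)
  (hL : is_lie br) (hQ : is_lie brQ)
  (Phi : {vspace L}) (hPhi : is_frattini br Phi)
  (pi : 'Hom(L, Q)) (hpi : is_quotient_map br brQ pi Phi) :
  (forall S N : {vspace L}, subalg br S -> (Phi <= S)%VS ->
     is_nil br S N -> is_nil brQ (pi @: S)%VS (pi @: N)%VS)
  /\
  ((forall S : {vspace L}, two_generated br S -> S != fullv%VS ->
      triangulable br S) ->
   forall T : {vspace Q}, two_generated brQ T -> T != fullv%VS ->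
      triangulable brQ T).
Proof.
case: hpi => hsurj hker hhom.
have surj : forall w : Q, exists y, w = pi y.
  move=> w; have : w \in limg pi by rewrite hsurj memvf.
  by case/memv_imgP => y _ ->; exists y.
have iterpi : forall k x y, iter k (brQ (pi x)) (pi y) = pi (iter k (br x) y).
  by move=> k x y; elim: k => [//|k IH]; rewrite !iterS IH hhom.
have nilpi : forall x, ad_nilpotent br x -> ad_nilpotent brQ (pi x).
  move=> x [k hk]; exists k => w; have [y ->] := surj w.
  by rewrite iterpi hk linear0.
split.
  move=> S N hS hPS [[hNS hNid] hNnil hNmax].
  split.
  - split; first exact: limgS.
    move=> u v /memv_imgP[s sS ->] /memv_imgP[n nN ->].
    by rewrite -hhom memv_img // hNid.
  - by move=> v /memv_imgP[n nN ->]; apply: nilpi; apply: hNnil.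
  - move=> J [hJS hJid] hJnil.
    pose I := (S :&: pi @^-1: J)%VS.
    have hI : ideal_of br S I.
      split; first exact: capvSl.
      move=> x y xS; rewrite !memv_cap => /andP[yS yJ].
      rewrite hS //= -memv_preim hhom hJid ?memv_img //.
      by rewrite memv_preim.
    have hInil : forall x, x \in I -> ad_nilpotent br x.
      move=> x; rewrite memv_cap => /andP[xS xJ].
      rewrite -memv_preim in xJ.
      have [k hk] := hJnil _ xJ.
      apply: (key hL hPhi (n:=k)) => y.
      by rewrite -hker memv_ker -iterpi hk.
    have hIN := hNmax I hI hInil.
    apply/subvP => v vJ.
    have := subvP hJS v vJ; case/memv_imgP => s sS vs.
    apply/memv_imgP; exists s => //.
    apply: (subvP hIN); rewrite memv_cap sS /= -memv_preim -vs //.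
move=> hyp T [u [v [hT uT vT hTmin]]] hTf.
have [a ua] := surj u; have [b vb] := surj v.
have [S [hS aS bS hSmin]] := gen_exists br a b.
have hgen : two_generated br S by exists a, b; split.
have piS_sub : subalg brQ (pi @: S)%VS.
  move=> p q /memv_imgP[s sS ->] /memv_imgP[s' s'S ->].
  by rewrite -hhom memv_img // hS.
have hTS : (T <= pi @: S)%VS.
  by apply: hTmin => //; rewrite ?ua ?vb memv_img.
have hpre : subalg br (pi @^-1: T)%VS.
  move=> x y; rewrite -!memv_preim => xT yT.
  by rewrite hhom hT.
have hSpre : (S <= pi @^-1: T)%VS.
  by apply: hSmin => //; rewrite -memv_preim -?ua -?vb.
have hSeq : (pi @: S)%VS = T.
  apply: subv_anti; rewrite hTS andbT.
  apply/subvP => w /memv_imgP[s sS ->]; rewrite memv_preim.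
  exact: (subvP hSpre).
have hSf : S != fullv%VS.
  by apply/eqP => Sf; move/eqP: hTf; apply; rewrite -hSeq Sf hsurj.
have tri := hyp S hgen hSf.
have hder : (derived brQ T <= pi @: derived br S)%VS.
  apply/span_subvP => z /allpairsP[[e e'] [/= he he' ->]].
  have := vbasis_mem he; have := vbasis_mem he'.
  rewrite -hSeq => /memv_imgP[s' s'S ->] /memv_imgP[s sS ->].
  by rewrite -hhom memv_img // br_derived.
move=> w /(subvP hder) /memv_imgP[d dD ->].
exact: nilpi (tri d dD).
Qed.
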